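(* Suppose $\|\mu_a\|_\infty,\|\widehat\mu_a\|_\infty\le B<\infty$ a.s. for all $a$, and $\mathbb{P}$ satisfies the margin condition with some $\kappa>0$, $\alpha>0$. Let $C^*\in\mathcal{C}_k^*$. Then for each $a\in\mathcal{A}$, $$\mathbb{P}\big|\Pi_{C^*,a}(\widehat\mu)-\Pi_{C^*,a}(\mu)\big|\lesssim\max_j\big\|\mathbb{1}\{\zeta_j(\widehat\mu;C^* )>0\}-\mathbb{1}\{\zeta_j(\mu;C^* )>0\}\big\|_\infty\sum_a\|\widehat\mu_a-\mu_a\|_{\mathbb{P},1}+\sum_a\|\widehat\mu_a-\mu_a\|_\infty^\alpha.$$
   Context: $Z=(Y,A,X)\sim\mathbb{P}$, $A\in\mathcal{A}=\{1,\dots,p\}$; $\mu_a(X)=\mathbb{E}(Y\mid X,A=a)$, $\mu=(\mu_1(X),\dots,\mu_p(X))^\top$, and $\widehat\mu$ an estimator of $\mu$ (held fixed under $\mathbb{P}$). Codebooks $C=\{c_1,\dots,c_k\}\subset\mathbb{R}^p$; $\mathcal{C}_k$ the codebooks of size $k$ in the image of $\mu$; $\Pi_C(x)=\arg\min_{c\in C}\|c-x\|_2^2$ and $\Pi_{C,a}(x)$ its $a$-th coordinate; $R(C)=\mathbb{E}\|\mu-\Pi_C(\mu)\|_2^2$; $\mathcal{C}_k^*$ its set of minimizers. $\zeta_j(\bar\mu;C)=\min_{i\ne j}\|\bar\mu-c_i\|_2-\|\bar\mu-c_j\|_2$. $V_j(C^* )=\{x:\|x-c_j^*\|_2\le\|x-c_i^*\|_2\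 \forall i\ne j\}$; $N_{C^*}(t)=\bigcup_j\{x\in V_j(C^* ):|\,\|x-c_j^*\|_2-\min_{i\ne j}\|x-c_i^*\|_2\,|\le t\}$; margin condition (radius $\kappa$, rate $\alpha$): for $0\le t\le\kappa$, $\sup_{C^*\in\mathcal{C}_k^*}\mathbb{P}(\mu\in N_{C^*}(t))\lesssim t^\alpha$. $\|f\|_{\mathbb{P},1}=\int|f|d\mathbb{P}$, $\|\cdot\|_\infty$ sup norm, $\lesssim$ inequality up to a multiplicative constant. *)

(* Defs.v *)
From HB Require Import structures.
From mathcomp Require Import all_boot all_order all_algebra.
From mathcomp Require Import all_classical all_reals all_analysis ess_sup_inf.
Set Implicit Arguments. Unset Strict Implicit. Unset Printing Implicit Defensive.
Import Order.TTheory GRing.Theory Num.Theory.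
Import numFieldNormedType.Exports.
Local Open Scope classical_set_scope.
Local Open Scope ring_scope.

(* Vectors in R^p are functions 'I_p -> R; a codebook of size k is C : 'I_k -> R^p. *)
Section Defs.
Context {R : realType} {p k : nat}.

Definition sqdist (x y : 'I_p -> R) : R := \sum_(i < p) (x i - y i) ^+ 2.
Definition edist (x y : 'I_p -> R) : R := Num.sqrt (sqdist x y).

(* Pi_C(x) = argmin_{c in C} ||c - x||^2 ; ties broken by the smallest index *)
Definition nearest (C : 'I_k -> 'I_p -> R) (x : 'I_p -> R) : option 'I_k :=
  [pick j | [forall i, sqdist x (C j) <= sqdist x (C i)]].
Definition Pi (C : 'I_k -> 'I_p -> R) (x : 'I_p -> R) : 'I_p -> R :=
  match nearest C x with Some j => C j | None => fun _ => 0 end.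

(* min_{i <> j} ||x - c_i||  (= +oo when k = 1) *)
Definition minother (C : 'I_k -> 'I_p -> R) (j : 'I_k) (x : 'I_p -> R) : \bar R :=
  \big[Order.min/+oo%E]_(i | i != j) (edist x (C i))%:E.

Definition zeta (C : 'I_k -> 'I_p -> R) (j : 'I_k) (x : 'I_p -> R) : \bar R :=
  (minother C j x - (edist x (C j))%:E)%E.

Definition voronoi (C : 'I_k -> 'I_p -> R) (j : 'I_k) : set ('I_p -> R) :=
  [set x | forall i, i != j -> edist x (C j) <= edist x (C i)].

Definition margin_nbhd (C : 'I_k -> 'I_p -> R) (t : R) : set ('I_p -> R) :=
  \bigcup_(j in [set: 'I_k])
    [set x | voronoi C j x /\ (`| (edist x (C j))%:E - minother C j x | <= t%:E)%E].

Context {d : measure_display} {T : measurableType d}.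

Definition risk (P : probability T R) (mu : T -> 'I_p -> R) (C : 'I_k -> 'I_p -> R)
  : \bar R := (\int[P]_w (sqdist (mu w) (Pi C (mu w)))%:E)%E.

Definition codebook_in (mu : T -> 'I_p -> R) (C : 'I_k -> 'I_p -> R) : Prop :=
  injective C /\ forall j, exists w, mu w = C j.

Definition optimal (P : probability T R) (mu : T -> 'I_p -> R) (C : 'I_k -> 'I_p -> R)
  : Prop :=
  codebook_in mu C /\
  forall C' : 'I_k -> 'I_p -> R, codebook_in mu C' -> (risk P mu C <= risk P mu C')%E.

(* margin condition with radius kappa, rate alpha, and multiplicative constant cm:
   for 0 <= t <= kappa, sup_{C* in C_k^*} P(mu in N_{C*}(t)) <= cm * t^alpha *)
Definition margin_condition (P : probability T R) (mu : T -> 'I_p -> R)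
  (kappa alpha cm : R) : Prop :=
  forall t : R, 0 <= t -> t <= kappa ->
  forall C : 'I_k -> 'I_p -> R, optimal P mu C ->
    (P (mu @^-1` margin_nbhd C t) <= (cm * t `^ alpha)%:E)%E.

Definition supnorm (P : probability T R) (f : T -> R) : R :=
  fine (ess_sup P (fun w => (`|f w|)%:E)).
Definition L1norm (P : probability T R) (f : T -> R) : R :=
  fine (\int[P]_w (`|f w|)%:E)%E.

Definition ind_zeta (C : 'I_k -> 'I_p -> R) (j : 'I_k) (x : 'I_p -> R) : R :=
  ((0 < zeta C j x)%E)%:R.

End Defs.

(* Main.v *)
Require Import Defs.
From HB Require Import structures.
From mathcomp Require Import all_boot all_order all_algebra.
From mathcomp Require Import all_classical all_reals all_analysis ess_sup_inf measurable_realfun.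
From mathcomp Require Import ring lra.
Import Order.TTheory GRing.Theory Num.Theory.
Import numFieldNormedType.Exports.
Local Open Scope classical_set_scope.
Local Open Scope ring_scope.
Import Defs.

Set Implicit Arguments. Unset Strict Implicit. Unset Printing Implicit Defensive.

Section Geo.
Context {R : realType} {p : nat}.
Implicit Types x y z : 'I_p -> R.

Lemma sqdist_ge0 x y : 0 <= sqdist x y.
Proof. by apply: sumr_ge0 => i _; exact: sqr_ge0. Qed.

Lemma edist_ge0 x y : 0 <= edist x y.
Proof. exact: sqrtr_ge0. Qed.

Lemma sqdistC x y : sqdist x y = sqdist y x.
Proof. by apply: eq_bigr => i _; rewrite -sqrrN opprB. Qed.

Lemma edistC x y : edist x y = edist y x.
Proof. by rewrite /edist sqdistC. Qed.

Lemma edist_le x y z : (edist x y <= edist x z) = (sqdist x y <= sqdist x z).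
Proof. by rewrite /edist ler_sqrt // sqdist_ge0. Qed.

Lemma CS (u v : 'I_p -> R) :
  (\sum_i u i * v i) ^+ 2 <= (\sum_i u i ^+ 2) * (\sum_i v i ^+ 2).
Proof.
set A := \sum_i u i ^+ 2; set S := \sum_i u i * v i; set C := \sum_i v i ^+ 2.
have A0 : 0 <= A by apply: sumr_ge0 => i _; exact: sqr_ge0.
have C0 : 0 <= C by apply: sumr_ge0 => i _; exact: sqr_ge0.
have key t : 0 <= t ^+ 2 * A - 2 * t * S + C.
  have -> : t ^+ 2 * A - 2 * t * S + C = \sum_i (t * u i - v i) ^+ 2.
    rewrite /A /S /C mulr_sumr mulr_sumr -sumrN -!big_split /=.
    by apply: eq_bigr => i _; ring.
  by apply: sumr_ge0 => i _; exact: sqr_ge0.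
have [A0'|Apos] := eqVneq A 0.
  have u0 i : u i = 0.
    apply/eqP; rewrite -sqrf_eq0; apply/eqP.
    have : 0 <= u i ^+ 2 <= A.
      rewrite sqr_ge0 /A (bigD1 i) //= lerDl; apply: sumr_ge0 => j _; exact: sqr_ge0.
    by rewrite A0' => /andP[h1 h2]; apply/eqP; rewrite eq_le h1 h2.
  rewrite /S (eq_bigr (fun _ => 0)) ?big1 // => [|i _]; last by rewrite u0 mul0r.
  by rewrite expr0n /= mulr_ge0.
have Ap : 0 < A by rewrite lt_def Apos A0.
have := key (S / A).
have -> : (S / A) ^+ 2 * A - 2 * (S / A) * S + C = C - S ^+ 2 / A.
  by field; rewrite Apos.
rewrite subr_ge0 ler_pdivrMr // => h; by rewrite mulrC.
Qed.

Lemma sum_mul_le (u v : 'I_p -> R) :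
  \sum_i u i * v i <= Num.sqrt (\sum_i u i ^+ 2) * Num.sqrt (\sum_i v i ^+ 2).
Proof.
rewrite -sqrtrM; last by apply: sumr_ge0 => i _; exact: sqr_ge0.
apply: le_trans (ler_norm _) _.
rewrite -(sqrtr_sqr (\sum_i u i * v i)) ler_sqrt; first exact: CS.
by apply: mulr_ge0; apply: sumr_ge0 => i _; exact: sqr_ge0.
Qed.

Lemma edist_tri x y z : edist x z <= edist x y + edist y z.
Proof.
rewrite /edist -(@ler_pXn2r _ 2) //; last 2 first.
- by rewrite nnegrE sqrtr_ge0.
- by rewrite nnegrE addr_ge0 // sqrtr_ge0.
rewrite sqr_sqrtr ?sqdist_ge0 // sqrrD !sqr_sqrtr ?sqdist_ge0 //.
have -> : sqdist x z = sqdist x y + 2 * \sum_i (x i - y i) * (y i - z i) + sqdist y z.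
  rewrite /sqdist mulr_sumr -!big_split /=; apply: eq_bigr => i _; ring.
rewrite lerD2r lerD2l.
have := sum_mul_le (fun i => x i - y i) (fun i => y i - z i).
rewrite /sqdist /= => h; lra.
Qed.

Lemma coord_le_edist x y a : `|x a - y a| <= edist x y.
Proof.
rewrite -(sqrtr_sqr (x a - y a)) /edist ler_sqrt ?sqdist_ge0 //.
rewrite /sqdist (bigD1 a) //= lerDl; apply: sumr_ge0 => j _; exact: sqr_ge0.
Qed.

Lemma edist_le_sum x y : edist x y <= \sum_i `|x i - y i|.
Proof.
have S0 : 0 <= \sum_i `|x i - y i| by apply: sumr_ge0 => i _.
rewrite -(ger0_norm S0) -(sqrtr_sqr (\sum_i _)) /edist ler_sqrt; last exact: sqr_ge0.
rewrite /sqdist expr2 mulr_suml; apply: ler_sum => i _.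
have -> : (x i - y i) ^+ 2 = `|x i - y i| * `|x i - y i|.
  by rewrite -normrM -expr2 ger0_norm // sqr_ge0.
rewrite ler_wpM2l // (bigD1 i) //= lerDl; exact: sumr_ge0.
Qed.

End Geo.

Section Near.
Context {R : realType} {p k : nat}.
Implicit Types (x : 'I_p -> R) (C : 'I_k -> 'I_p -> R).

Lemma nearest_min C x j : nearest C x = Some j ->
  forall i, sqdist x (C j) <= sqdist x (C i).
Proof.
rewrite /nearest; case: pickP => // j' /forallP h [<-] i; exact: h.
Qed.

Lemma nearest_ex C x (i0 : 'I_k) : exists j, nearest C x = Some j.
Proof.
rewrite /nearest; case: pickP => [j _|h]; first by exists j.
exfalso.
case: (@Order.TotalTheory.arg_minP _ _ _ i0 xpredT (fun i => sqdist x (C i)) isT) => j _ jmin.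
by move: (h j); rewrite /=; move/negbT/negP; apply; apply/forallP => i; exact: jmin.
Qed.

Lemma Pi_spec C x (i0 : 'I_k) : exists j, Pi C x = C j /\ nearest C x = Some j /\
  forall i, sqdist x (C j) <= sqdist x (C i).
Proof.
have [j hj] := nearest_ex C x i0.
by exists j; rewrite /Pi hj; split => //; split => //; exact: nearest_min.
Qed.

End Near.

Section Int.
Local Open Scope ereal_scope.
Context d {T : measurableType d} {R : realType}.
Variable mu : {measure set T -> \bar R}.
Import HBNNSimple.

Lemma int_le_nm (f g : T -> \bar R) : (forall x, 0 <= f x) ->
  (forall x, f x <= g x) -> \int[mu]_x f x <= \int[mu]_x g x.
Proof.
move=> f0 fg; have g0 x : 0 <= g x := le_trans (f0 x) (fg x).
rewrite !ge0_integralTE //; apply: le_ereal_sup => _ [h /= hf <-].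
by exists h => //= x; exact: le_trans (hf x) (fg x).
Qed.

Lemma int_ae_le_nm (f g : T -> \bar R) : (forall x, 0 <= f x) ->
  (forall x, 0 <= g x) -> measurable_fun setT g ->
  {ae mu, forall x, f x <= g x} -> \int[mu]_x f x <= \int[mu]_x g x.
Proof.
move=> f0 g0 mg ae; rewrite [X in X <= _]ge0_integralTE //.
apply: ge_ereal_sup => _ [h /= hf <-].
have := integral_nnsfun mu measurableT h; rewrite patch_setT => <-.
apply: ae_ge0_le_integral => //.
- move=> x _; rewrite (_ : 0 = 0%:E)// lee_fin. by [].
- by apply/measurable_EFinP; exact: measurable_funP.
- move: ae; apply: filterS => x fgx _; exact: le_trans (hf x) fgx.
Qed.


End Int.

Section Marg.
Context {R : realType} {p k : nat}.
Implicit Types (x : 'I_p -> R) (C : 'I_k -> 'I_p -> R).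

Lemma minother_char C j x t : voronoi C j x ->
  ((`| (edist x (C j))%:E - minother C j x | <= t%:E)%E <->
   exists i, i != j /\ edist x (C i) <= edist x (C j) + t).
Proof.
move=> vx; have mge : ((edist x (C j))%:E <= minother C j x)%E.
  apply: le_bigmin; first exact: leey.
  by move=> i ij; rewrite lee_fin; apply: vx.
split.
- move=> h; apply/not_existsP => hn.
  have gt : (((edist x (C j)) + t)%:E < minother C j x)%E.
    apply/bigmin_gtP; split; first exact: ltey.
    move=> i ij; rewrite lte_fin ltNge; apply/negP => hle.
    by apply: (hn i); split.
  move: h gt; case E: (minother C j x) => [r| |] //=.
  + rewrite lee_fin lte_fin => h1 h2.
    move: h1; rewrite ler_norml => /andP[h1 _]; clear -h1 h2; lra.
- move=> [i [ij hi]].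
  have mle : (minother C j x <= (edist x (C i))%:E)%E by exact: bigmin_le_cond.
  move: mge mle; case E: (minother C j x) => [r| |] //=.
  rewrite !lee_fin => h1 h2.
  rewrite ler_norml; apply/andP; clear -h1 h2 hi; split; lra.
Qed.

End Marg.

Section MargMeas.
Context {R : realType} {p k : nat} d {T : measurableType d}.

Lemma meas_le (f g : T -> R) : measurable_fun setT f -> measurable_fun setT g ->
  measurable [set w | f w <= g w].
Proof.
move=> mf mg; have := measurable_fun_ler mf mg measurableT (Y := [set true]) I.
by rewrite setTI; congr measurable; apply/seteqP; split => w /=.
Qed.

Lemma meas_edist (mu : T -> 'I_p -> R) (c : 'I_p -> R) :
  (forall a, measurable_fun setT (fun w => mu w a)) ->
  measurable_fun setT (fun w => edist (mu w) c).
Proof.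
move=> hm; rewrite /edist /sqdist.
apply: (measurableT_comp (continuous_measurable_fun (@sqrt_continuous R))).
apply: measurable_sum => i; apply: measurable_funX; apply: measurable_funB => //.
Qed.

Lemma meas_margin (mu : T -> 'I_p -> R) (C : 'I_k -> 'I_p -> R) t :
  (forall a, measurable_fun setT (fun w => mu w a)) ->
  measurable (mu @^-1` margin_nbhd C t).
Proof.
move=> hm; set e := fun j w => edist (mu w) (C j).
have me j : measurable_fun setT (e j) by exact: meas_edist.
rewrite (_ : mu @^-1` _ = \bigcup_(j in setT)
   ((\bigcap_(i in [set i | i != j]) [set w | e j w <= e i w]) `&`
    \bigcup_(i in [set i | i != j]) [set w | e i w <= e j w + t])).
  apply: fin_bigcup_measurable; first exact: finite_finset.
  move=> j _; apply: measurableI.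
    apply: fin_bigcap_measurable; first exact: finite_finset.
    by move=> i _; apply: meas_le.
  apply: fin_bigcup_measurable; first exact: finite_finset.
  move=> i _; apply: meas_le => //; apply: measurable_funD => //.
apply/seteqP; split => w /=.
- case => j _ [vx hm']; exists j => //; split.
    by move=> i ij; exact: vx i ij.
  by have [i [ij hi]] := (minother_char t vx).1 hm'; exists i.
- case => j _ [hv [i ij hi]]; exists j => //.
  have vx : voronoi C j (mu w) by move=> i' ij'; exact: hv i' ij'.
  by split => //; apply/(minother_char t vx).2; exists i.
Qed.

End MargMeas.


Section Box.
Context {R : realType} {p : nat}.
Implicit Types x y : 'I_p -> R.

Lemma box_edist x y B : (forall a, `|x a| <= B) -> (forall a, `|y a| <= B) ->
  edist x y <= p%:R * (2 * B).
Proof.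
move=> hx hy; apply: le_trans (edist_le_sum x y) _.
have -> : p%:R * (2 * B) = \sum_(i < p) (2 * B).
  by rewrite sumr_const card_ord mulr_natl.
apply: ler_sum => i _; apply: le_trans (ler_normB _ _) _.
by have := hx i; have := hy i; lra.
Qed.

End Box.

Section Center.
Context {R : realType} {p k : nat} d {T : measurableType d}.

Lemma PT (P : probability T R) : (P : {measure set T -> \bar R}) setT = 1%E.
Proof. exact: probability_setT. Qed.

Lemma PC (P : probability T R) A : measurable A ->
  (P : {measure set T -> \bar R}) (~` A) = (1 - (P : {measure set T -> \bar R}) A)%E.
Proof. exact: probability_setC. Qed.

Lemma center_near (P : probability T R) (mu : T -> 'I_p -> R)
  (C : 'I_k -> 'I_p -> R) B (i0 : 'I_k) :
  {ae P, forall w a, `|mu w a| <= B} -> optimal P mu C ->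
  exists l, forall x, (forall a, `|x a| <= B) ->
    edist x (C l) <= p%:R * (2 * B) + Num.sqrt ((p%:R * (2 * B)) ^+ 2 + 1).
Proof.
move=> hae [[Cinj Cim] Copt].
set E := p%:R * (2 * B).
have sq0 : 0 <= Num.sqrt (E ^+ 2 + 1) by exact: sqrtr_ge0.
have [w0 hw0] : exists w, forall a, `|mu w a| <= B.
  have PF : ProperFilter (almost_everywhere P).
    apply: ae_properfilter_algebraOfSetsType; apply: (@lt_le_trans _ _ 1%E); first exact: lte01.
    by rewrite PT.
  by have := @filter_ex _ _ PF _ hae.
set z := mu w0.
have E0 : 0 <= E := le_trans (edist_ge0 _ _) (box_edist hw0 hw0).
case: (pselect (exists l, C l = z)) => [[l hl]|hno].
  by exists l => x hx; rewrite hl; apply: le_trans (box_edist hx hw0) _; rewrite lerDl.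
set C' := fun j => if j == i0 then z else C j.
have cb' : codebook_in mu C'.
  split.
    move=> j1 j2; rewrite /C'.
    case: (eqVneq j1 i0) => [->|h1]; case: (eqVneq j2 i0) => [->|h2] //.
    - by move=> e; exfalso; apply: hno; exists j2.
    - by move=> e; exfalso; apply: hno; exists j1.
    - exact: Cinj.
  by move=> j; rewrite /C'; case: (j == i0); [exists w0|exact: Cim].
have hrC' : (risk P mu C' <= (E ^+ 2)%:E)%E.
  rewrite /risk; apply: (@le_trans _ _ (\int[P]_w (cst (E ^+ 2)%:E) w)%E).
    apply: int_ae_le_nm => //.
    - by move=> w; rewrite lee_fin sqdist_ge0.
    - by move=> w /=; rewrite lee_fin sqr_ge0.
    move: hae; apply: filterS => w hw /=; rewrite lee_fin.
    have [j [-> [_ hj]]] := Pi_spec C' (mu w) i0.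
    apply: le_trans (hj i0) _; rewrite /C' eqxx.
    rewrite -(sqr_sqrtr (sqdist_ge0 _ _)) ler_sqr ?nnegrE ?sqrtr_ge0 //.
      exact: box_edist.
  by rewrite integral_cst // PT mule1.

have [w1 [hw1 hd1]] : exists w, (forall a, `|mu w a| <= B) /\
    sqdist (mu w) (Pi C (mu w)) <= E ^+ 2 + 1.
  apply: contrapT => hn.
  have [N [mN PN sN]] := hae.
  have hge : ((E ^+ 2 + 1)%:E <= risk P mu C)%E.
    rewrite /risk.
    apply: (@le_trans _ _ (\int[P]_w ((cst (E ^+ 2 + 1)%:E) \_ (~` N)) w)%E).
      rewrite -integral_mkcond integral_cst; last exact: measurableC.
      have PN' : (P : {measure set T -> \bar R}) N = 0%E := PN.
      by rewrite PC // PN' sube0 mule1.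
    apply: int_le_nm.
      by apply: erestrict_ge0 => w _ /=; rewrite lee_fin addr_ge0 // sqr_ge0.
    move=> w; rewrite /patch; case: ifPn => [/set_mem hw|_]; last first.
      by rewrite lee_fin sqdist_ge0.
    have hb : forall a, `|mu w a| <= B.
      by apply: contrapT => hb; apply: hw; apply: sN.
    rewrite lee_fin /=; apply: ltW; rewrite ltNge; apply/negP => hle.
    by apply: hn; exists w.
  have := le_trans hge (le_trans (Copt C' cb') hrC').
  by rewrite lee_fin; lra.
have [j [hPi _]] := Pi_spec C (mu w1) i0.
exists j => x hx; rewrite hPi in hd1.
apply: le_trans (edist_tri x (mu w1) (C j)) _.
apply: lerD; first exact: box_edist.
by rewrite /edist ler_sqrt // addr_ge0 // sqr_ge0.
Qed.

End Center.

Unset Implicit Arguments.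
Theorem lemmaA2 (R : realType) (p k : nat) (B kappa alpha cm : R) :
  0 < kappa -> 0 < alpha ->
  exists K : R, 0 < K /\
  forall (d : measure_display) (T : measurableType d) (P : probability T R)
    (mu muhat : T -> 'I_p -> R) (Cs : 'I_k -> 'I_p -> R),
    (forall a, measurable_fun setT (fun w => mu w a)) ->
    (forall a, measurable_fun setT (fun w => muhat w a)) ->
    (forall a, {ae P, forall w, `|mu w a| <= B}) ->
    (forall a, {ae P, forall w, `|muhat w a| <= B}) ->
    margin_condition (k:=k) P mu kappa alpha cm ->
    optimal P mu Cs ->
    forall a : 'I_p,
    (\int[P]_w (`|Pi Cs (muhat w) a - Pi Cs (mu w) a|)%:E <=
     (K * ((\big[Num.max/0]_(j < k)
               supnorm P (fun w => ind_zeta Cs j (muhat w) - ind_zeta Cs j (mu w)))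
             * (\sum_(b < p) L1norm P (fun w => muhat w b - mu w b))
           + \sum_(b < p) (supnorm P (fun w => muhat w b - mu w b)) `^ alpha))%:E)%E.
Proof.
move=> kp ap.
pose E := p%:R * (2 * `|B|).
pose E0 := E + Num.sqrt (E ^+ 2 + 1).
pose D := 2 * E0 + 2 * E.
pose c1 := `|cm| + kappa `^ (- alpha).
pose K := D * c1 * (2 * p%:R) `^ alpha + 1.
have E_ge0 : 0 <= E by rewrite /E mulr_ge0 // mulr_ge0.
have E0_ge0 : 0 <= E0 by rewrite /E0 addr_ge0 // sqrtr_ge0.
have D_ge0 : 0 <= D by rewrite /D addr_ge0 // mulr_ge0.
have c1_ge0 : 0 <= c1 by rewrite /c1 addr_ge0 // powR_ge0.
have K1_ge0 : 0 <= D * c1 * (2 * p%:R) `^ alpha by rewrite mulr_ge0 ?powR_ge0 // mulr_ge0.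
exists K; split; first by rewrite /K ltr_pwDr.
move=> d T P mu muhat Cs hm hmh hB hBh hmarg hopt a.
set A := \big[Num.max/0]_(j < k) _.
set L := \sum_(b < p) L1norm _ _.
set s := fun b => supnorm P (fun w => muhat w b - mu w b).
set S := \sum_(b < p) (_ `^ alpha).
have A0 : 0 <= A by exact: bigmax_ge_id.
have L0 : 0 <= L.
  by apply: sumr_ge0 => b _; rewrite /L1norm; apply: fine_ge0; apply: integral_ge0 => w _; rewrite lee_fin.
have S0 : 0 <= S by apply: sumr_ge0 => b _; exact: powR_ge0.
have rhs0 : (0 <= (K * (A * L + S))%:E)%E.
  by rewrite lee_fin mulr_ge0 ?addr_ge0 ?mulr_ge0 // ltW // /K ltr_pwDr.
have [k0|kpos] := posnP k.
  have Pi0 x : Pi Cs x = fun _ => 0.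
    by rewrite /Pi /nearest; case: pickP => // j; have := ltn_ord j; rewrite {2}k0.
  have -> : (\int[P]_w (`|Pi Cs (muhat w) a - Pi Cs (mu w) a|)%:E = 0)%E.
    rewrite -(integral0 P setT); apply: eq_integral => w _.
    by rewrite !Pi0 subrr normr0.
  exact: rhs0.
pose i0 := Ordinal kpos.
have PT1 : ((P : {measure set T -> \bar R}) setT = 1)%E by exact: PT.
have hs b : {ae P, forall w, `|muhat w b - mu w b| <= s b} /\ 0 <= s b.
  set f := fun w => (`|muhat w b - mu w b|)%:E.
  have up : (ess_sup P f <= (2 * B)%:E)%E.
    apply/ess_supP; apply: filterS2 (hB b) (hBh b) => w h1 h2.
    rewrite /f lee_fin; apply: le_trans (ler_normB _ _) _; lra.
  have lo : (0 <= ess_sup P f)%E.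
    apply: ess_sup_gee; first by rewrite PT1 lte01.
    by apply: nearW => w; rewrite /f lee_fin.
  have fin : ess_sup P f \is a fin_num.
    by rewrite ge0_fin_numE // (le_lt_trans up) // ltey.
  split; last by rewrite /s /supnorm; apply: fine_ge0.
  apply: filterS (ess_sup_ge P f) => w hw.
  by rewrite -lee_fin /s /supnorm fineK.
have G : {ae P, forall w b, [/\ `|mu w b| <= B, `|muhat w b| <= B &
    `|muhat w b - mu w b| <= s b]}.
  apply: filter_forall => b.
  by apply: filterS2 (filterI (hB b) (hBh b)) (hs b).1 => w [h1 h2] h3; split.
have PF : ProperFilter (almost_everywhere (P : {measure set T -> \bar R})).
  by apply: ae_properfilter_algebraOfSetsType; rewrite PT1 lte01.
have [w0 hw0] := @filter_ex _ _ PF _ G.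
have B0 : 0 <= B by have [h1 _ _] := hw0 a; exact: le_trans (normr_ge0 _) h1.
have eB : `|B| = B := ger0_norm B0.
have hE : E = p%:R * (2 * B) by rewrite /E eB.
have aeB : {ae P, forall w b, `|mu w b| <= B}.
  by apply: filterS G => w hw b; have [] := hw b.
have [l hl] := center_near i0 aeB hopt.
rewrite -hE in hl.
pose t0 := 2 * \sum_b s b.
have sum_s0 : 0 <= \sum_b s b by apply: sumr_ge0 => b _; exact: (hs b).2.
have t0_ge0 : 0 <= t0 by rewrite /t0 mulr_ge0.
pose Sm := mu @^-1` margin_nbhd Cs t0.
have mSm : measurable Sm by exact: meas_margin.
have pw : {ae P, forall w, (`|Pi Cs (muhat w) a - Pi Cs (mu w) a|)%:E <=
    ((cst D%:E) \_ Sm) w}%E.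
  apply: filterS G => w hw.
  set x := mu w; set y := muhat w.
  have bx : forall b, `|x b| <= B by move=> b; have [] := hw b.
  have by' : forall b, `|y b| <= B by move=> b; have [] := hw b.
  have dxy : edist x y <= \sum_b s b.
    apply: le_trans (edist_le_sum x y) _; apply: ler_sum => b _.
    by rewrite distrC; have [] := hw b.
  have exy : edist x y <= E by rewrite hE; exact: box_edist.
  have [j [hPx [_ hjmin]]] := Pi_spec Cs x i0.
  have [i [hPy [_ himin]]] := Pi_spec Cs y i0.
  have [eij|ij] := eqVneq i j.
    rewrite hPx hPy eij subrr normr0; apply: erestrict_ge0 => ? _ /=.
    by rewrite lee_fin.
  have ej : edist x (Cs j) <= E0.
    apply: le_trans (hl x bx); rewrite edist_le; exact: hjmin.
  have eyi : edist y (Cs i) <= edist y (Cs j) by rewrite edist_le; exact: himin.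
  have t1 := edist_tri x y (Cs i).
  have t2 := edist_tri y x (Cs j).
  have exy' : edist y x = edist x y by exact: edistC.
  have inS : Sm w.
    exists j => //.
    have vx : voronoi Cs j x by move=> i' _; rewrite edist_le; exact: hjmin.
    split => //; apply/(minother_char t0 vx).2; exists i; split => //.
    rewrite /t0; clear -t1 t2 exy' eyi dxy; lra.
  rewrite /patch mem_set //= lee_fin hPx hPy.
  have t3 := coord_le_edist (Cs i) (Cs j) a.
  have t4 := edist_tri (Cs i) y (Cs j).
  have eiy : edist (Cs i) y = edist y (Cs i) by exact: edistC.
  rewrite /D; clear -t2 t3 t4 eiy eyi exy exy' ej; lra.
have int1 : (\int[P]_w (`|Pi Cs (muhat w) a - Pi Cs (mu w) a|)%:E <=
    D%:E * (P : {measure set T -> \bar R}) Sm)%E.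
  apply: le_trans (int_ae_le_nm _ _ _ pw) _.
  - by move=> w; rewrite lee_fin.
  - by apply: erestrict_ge0 => ? _ /=; rewrite lee_fin.
  - by apply/(measurable_restrictT _ _).1 => //; exact: measurable_cst.
  by rewrite -integral_mkcond integral_cst.
have PS : ((P : {measure set T -> \bar R}) Sm <= (c1 * t0 `^ alpha)%:E)%E.
  have [h|h] := lerP t0 kappa.
    apply: le_trans (hmarg t0 t0_ge0 h Cs hopt) _.
    rewrite lee_fin ler_wpM2r ?powR_ge0 // /c1 (le_trans (ler_norm cm)) //.
    by rewrite lerDl powR_ge0.
  apply: le_trans (probability_le1 P mSm) _.
  rewrite lee_fin.
  have kpa : 0 < kappa `^ alpha := powR_gt0 _ kp.
  have mon : kappa `^ alpha <= t0 `^ alpha.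
    by apply: (ge0_ler_powR (ltW ap)) => //; rewrite ?nnegrE ltW.
  rewrite /c1 powRN mulrDl.
  apply: le_trans (_ : 1 <= (kappa `^ alpha)^-1 * t0 `^ alpha) _.
    by rewrite mulrC ler_pdivlMr // mul1r.
  by rewrite lerDr mulr_ge0 // powR_ge0.
have t0b : t0 `^ alpha <= (2 * p%:R) `^ alpha * S.
  case: (@Order.TotalTheory.arg_maxP _ _ _ a xpredT s isT) => m _ mmax.
  have sm0 : 0 <= s m := (hs m).2.
  have hsum : \sum_b s b <= p%:R * s m.
    apply: le_trans (_ : \sum_(b < p) s m <= _).
      by apply: ler_sum => b _; exact: mmax.
    by rewrite sumr_const card_ord mulr_natl.
  have -> : S = \sum_b s b `^ alpha by [].
  apply: le_trans (_ : ((2 * p%:R) * s m) `^ alpha <= _).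
    apply: (ge0_ler_powR (ltW ap)) => //; rewrite ?nnegrE ?mulr_ge0 //.
    by rewrite -mulrA /t0 ler_wpM2l.
  rewrite powRM ?mulr_ge0 // ler_wpM2l ?powR_ge0 //.
  rewrite (bigD1 m) //= lerDl; apply: sumr_ge0 => b _; exact: powR_ge0.
apply: le_trans int1 _.
apply: le_trans (lee_wpmul2l _ PS) _; first by rewrite lee_fin.
rewrite -EFinM lee_fin.
apply: le_trans (_ : D * (c1 * ((2 * p%:R) `^ alpha * S)) <= _).
  by rewrite ler_wpM2l // ler_wpM2l.
rewrite !mulrA.
apply: le_trans (_ : K * S <= _); last first.
  by rewrite ler_wpM2l ?lerDr ?mulr_ge0 // ltW // /K ltr_pwDr.
by rewrite ler_wpM2r // /K lerDl.
Qed.
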